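(* Let $n\ge q\ge 2$ be integers and put $S_1=\sqrt{q^2+4(q-1)(n-2)}$. Let $d$ be an integer and define $j$ by $d=n-1-\frac{n-2+j}{q}$ (so $j=q(n-1-d)-n+2$), and assume $j\in\left[0,\frac{S_1-q}{2}\right)$. Put $s=1-\frac{2d}{n}$, $d_0=n-\frac{j(n-1)}{q(j+q-1)}$, let $e$ be the unique rational number in $(0,1]$ such that $d_0+e$ is an integer, and set $$a=\frac{(n-1)(q-1)(q+j)}{q+j-1}+eq,\quad D=(j+q-1)[2n(q-1)-q]+q,\quad E=-n(n-1)(q-1)^2(j+q).$$ Then $$A_q(n,s)\le \frac{a(a+q)dq}{a^2(2-q-j)+Da+E}.$$
   Context: $H(n,q)$ is the set of words of length $n$ over the alphabet $\{0,1,\dots,q-1\}$ with Hamming distance $d(x,y)$; the inner product is $\langle x,y\rangle=1-\frac{2d(x,y)}{n}$. For $s\in[-1,1)$, $A_q(n,s)$ is the maximum cardinality of a code $C\subset H(n,q)$ with $\langle x,y\rangle\le s$ for all distinct $x,y\in C$ (equivalently, minimum distance at least $n(1-s)/2$). *)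

(* Defs.v *)
From mathcomp Require Import all_boot all_order all_algebra.
From mathcomp Require Import reals.
Set Implicit Arguments. Unset Strict Implicit. Unset Printing Implicit Defensive.
Import Order.TTheory GRing.Theory Num.Theory.
Local Open Scope ring_scope.

Definition word (n q : nat) := {ffun 'I_n -> 'I_q}.

Definition hamming (n q : nat) (x y : word n q) : nat :=
  #|[set i : 'I_n | x i != y i]|.

Definition inner (R : realFieldType) (n q : nat) (x y : word n q) : R :=
  1 - 2 * (hamming x y)%:R / n%:R.

Definition is_code (R : realFieldType) (n q : nat) (s : R) (C : {set word n q}) : bool :=
  [forall x in C, forall y in C, (x != y) ==> (inner R x y <= s)].

Definition A_q (R : realFieldType) (q n : nat) (s : R) : nat :=
  \max_(C : {set word n q} | is_code s C) #|C|.

(* Main.v *)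
Require Import Defs.
From mathcomp Require Import all_boot all_order all_algebra.
From mathcomp Require Import reals.
From mathcomp Require Import ring lra.
Import Order.TTheory GRing.Theory Num.Theory.
Local Open Scope ring_scope.
Set Implicit Arguments. Unset Strict Implicit. Unset Printing Implicit Defensive.

Section Gram.
Variable (R : realFieldType) (T : finType).

Definition gram (K : T -> T -> R) :=
  exists (I : finType) (w : I -> R) (f : I -> T -> R),
    (forall i, 0 <= w i) /\ (forall x y, K x y = \sum_i w i * (f i x * f i y)).

Lemma gram_ge0 K (C : {set T}) : gram K -> 0 <= \sum_(x in C) \sum_(y in C) K x y.
Proof.
case=> I [w [f [w0 eK]]].
have -> : \sum_(x in C) \sum_(y in C) K x y =
          \sum_i w i * ((\sum_(x in C) f i x) * (\sum_(y in C) f i y)).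
  under eq_bigr do under eq_bigr do rewrite eK.
  under eq_bigr do rewrite exchange_big /=.
  rewrite exchange_big /=; apply: eq_bigr => i _.
  rewrite big_distrl /= big_distrr /=; apply: eq_bigr => x _.
  rewrite big_distrr /= big_distrr /=; apply: eq_bigr => y _.
  by rewrite mulrA.
apply: sumr_ge0 => i _; apply: mulr_ge0 => //.
by rewrite -expr2 sqr_ge0.
Qed.

Lemma gram_mul K1 K2 : gram K1 -> gram K2 -> gram (fun x y => K1 x y * K2 x y).
Proof.
case=> I1 [w1 [f1 [w10 e1]]]; case=> I2 [w2 [f2 [w20 e2]]].
exists (I1 * I2)%type, (fun p => w1 p.1 * w2 p.2),
  (fun p x => f1 p.1 x * f2 p.2 x); split.
  by move=> p; apply: mulr_ge0.
move=> x y; rewrite e1 e2 big_distrlr /=.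
rewrite -(pair_bigA _ (fun i j => w1 i * w2 j * ((f1 i x * f2 j x) * (f1 i y * f2 j y)))) /=.
apply: eq_bigr => i _; apply: eq_bigr => j _; ring.
Qed.

Lemma gram1 : gram (fun _ _ => 1).
Proof.
exists 'I_1, (fun _ => 1), (fun _ _ => 1); split => // x y.
by rewrite big_ord1 !mulr1.
Qed.

Lemma gram_ext K K' : (forall x y, K x y = K' x y) -> gram K -> gram K'.
Proof.
move=> eK [I [w [f [w0 e]]]]; exists I, w, f; split => // x y.
by rewrite -eK e.
Qed.

Lemma gram_prod (I : Type) (s : seq I) (K : I -> T -> T -> R) :
  (forall i, gram (K i)) -> gram (fun x y => \prod_(i <- s) K i x y).
Proof.
move=> hK; elim: s => [|i s IH].
  by apply: gram_ext gram1 => x y; rewrite big_nil.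
apply: gram_ext (gram_mul (hK i) IH) => x y; by rewrite big_cons.
Qed.
End Gram.
Lemma sum_eq_l (R : nmodType) (I : finType) (a : I) (g : I -> R) :
  \sum_c (if a == c then g c else 0) = g a.
Proof.
rewrite (bigD1 a) //= eqxx big1 ?addr0 // => c /negbTE; by rewrite eq_sym => ->.
Qed.

Lemma gram_kernel (R : realFieldType) (q : nat) (a b : 'I_q) : (0 < q)%N ->
  \sum_(c : 'I_q) q%:R^-1 * ((q%:R * (a == c)%:R - 1) * (q%:R * (b == c)%:R - 1))
  = q%:R * (a == b)%:R - 1 :> R.
Proof.
move=> q0; have qn0 : q%:R != 0 :> R by rewrite pnatr_eq0 -lt0n.
have E c : q%:R^-1 * ((q%:R * (a == c)%:R - 1) * (q%:R * (b == c)%:R - 1)) =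
   q%:R * (if a == c then (b == c)%:R else 0) - (if a == c then 1 else 0)
   - (if b == c then 1 else 0) + q%:R^-1 :> R.
  case: (a == c); case: (b == c) => /=; rewrite ?mulr1 ?mulr0 ?subr0; field => //.

under eq_bigr do rewrite E.
rewrite !big_split /= !sumrN -!mulr_sumr !sum_eq_l sumr_const card_ord eq_sym.
rewrite -[q%:R^-1 *+ q]mulr_natr mulVf //.
ring.
Qed.
Section Sums.
Variable (R : comRingType) (I : finType).

Lemma sum_neq (t1 : I) (g : I -> R) :
  \sum_t2 (t1 != t2)%:R * g t2 = \sum_t g t - g t1.
Proof.
rewrite [in RHS](bigD1 t1) //= (bigD1 t1) //= eqxx mul0r add0r.
rewrite [g t1 + _]addrC addrK.
apply: eq_bigr => t; rewrite eq_sym => ->; by rewrite mul1r.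
Qed.

Lemma sum_neq2 (t1 t2 : I) (g : I -> R) : t1 != t2 ->
  \sum_t3 ((t1 != t3)%:R * (t2 != t3)%:R) * g t3 = \sum_t g t - g t1 - g t2.
Proof.
move=> h12.
under eq_bigr do rewrite -mulrA.
rewrite (sum_neq t1 (fun t => (t2 != t)%:R * g t)) sum_neq [t2 == t1]eq_sym h12 mul1r.
ring.
Qed.

Lemma Q2gen (g : I -> R) :
  \sum_t1 \sum_t2 (t1 != t2)%:R * (g t1 * g t2) =
  (\sum_t g t) ^+ 2 - \sum_t g t ^+ 2.
Proof.
have -> : \sum_t1 \sum_t2 (t1 != t2)%:R * (g t1 * g t2) =
          \sum_t1 g t1 * (\sum_t g t - g t1).
  apply: eq_bigr => t1 _; rewrite -sum_neq mulr_sumr; apply: eq_bigr => t2 _; ring.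
rewrite expr2 mulr_suml -sumrB; apply: eq_bigr => t _; ring.
Qed.

Lemma Q3gen (g : I -> R) :
  \sum_t1 \sum_t2 \sum_t3 ((t1 != t2)%:R * (t1 != t3)%:R * (t2 != t3)%:R) *
     (g t1 * g t2 * g t3) =
  (\sum_t g t) ^+ 3 - 3 * (\sum_t g t) * (\sum_t g t ^+ 2) + 2 * \sum_t g t ^+ 3.
Proof.
set L := \sum_t g t.
have -> : \sum_t1 \sum_t2 \sum_t3 ((t1 != t2)%:R * (t1 != t3)%:R * (t2 != t3)%:R) *
     (g t1 * g t2 * g t3) =
     \sum_t1 \sum_t2 (t1 != t2)%:R * (g t1 * g t2 * (L - g t1 - g t2)).
  apply: eq_bigr => t1 _; apply: eq_bigr => t2 _.
  have [<-|h12] := eqVneq t1 t2.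
    rewrite /= mul0r big1 // => t3 _; by rewrite !mul0r.
  rewrite /= -(sum_neq2 g h12) !mulr_sumr; apply: eq_bigr => t3 _; ring.
have -> : \sum_t1 \sum_t2 (t1 != t2)%:R * (g t1 * g t2 * (L - g t1 - g t2)) =
  L * (\sum_t1 \sum_t2 (t1 != t2)%:R * (g t1 * g t2))
  - \sum_t1 g t1 ^+ 2 * (\sum_t2 (t1 != t2)%:R * g t2)
  - \sum_t1 g t1 * (\sum_t2 (t1 != t2)%:R * g t2 ^+ 2).
  rewrite mulr_sumr -!sumrB; apply: eq_bigr => t1 _.
  rewrite !mulr_sumr -!sumrB; apply: eq_bigr => t2 _; ring.
rewrite Q2gen.
have -> : \sum_t1 g t1 ^+ 2 * \sum_t2 (t1 != t2)%:R * g t2 =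
          L * \sum_t g t ^+ 2 - \sum_t g t ^+ 3.
  rewrite mulr_sumr -sumrB; apply: eq_bigr => t _; rewrite sum_neq -/L; ring.
have -> : \sum_t1 g t1 * \sum_t2 (t1 != t2)%:R * g t2 ^+ 2 =
          L * \sum_t g t ^+ 2 - \sum_t g t ^+ 3.
  rewrite /L mulr_suml -sumrB; apply: eq_bigr => t _.
  rewrite (sum_neq t (fun t => g t ^+ 2)); ring.
rewrite -/L; ring.
Qed.
End Sums.

Section Words.
Variable (R : realFieldType) (n q : nat).
Local Notation W := (word n q).

Definition pp (x y : W) (t : 'I_n) : R := q%:R * (x t == y t)%:R - 1.

Lemma gram_pp t : (0 < q)%N -> gram (fun x y : W => pp x y t).
Proof.
move=> q0; exists 'I_q, (fun _ => q%:R^-1), (fun c (x : W) => q%:R * (x t == c)%:R - 1).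
split=> [c|x y]; first by rewrite invr_ge0 ler0n.
by rewrite gram_kernel.
Qed.

Lemma swap3 (C : {set W}) (F : 'I_n -> W -> W -> R) :
  \sum_(x in C) \sum_(y in C) \sum_t F t x y = \sum_t \sum_(x in C) \sum_(y in C) F t x y.
Proof.
under eq_bigr do rewrite exchange_big.
by rewrite exchange_big.
Qed.

Lemma pos1 (C : {set W}) : (0 < q)%N ->
  0 <= \sum_(x in C) \sum_(y in C) \sum_t pp x y t.
Proof.
move=> q0; rewrite swap3; apply: sumr_ge0 => t _; exact: gram_ge0 (gram_pp t q0).
Qed.

Lemma pos2 (C : {set W}) : (0 < q)%N ->
  0 <= \sum_(x in C) \sum_(y in C) \sum_t1 \sum_t2 (t1 != t2)%:R * (pp x y t1 * pp x y t2).
Proof.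
move=> q0; rewrite swap3; apply: sumr_ge0 => t1 _.
rewrite (swap3 C (fun t2 x y => (t1 != t2)%:R * (pp x y t1 * pp x y t2))).
apply: sumr_ge0 => t2 _.
under eq_bigr do rewrite -mulr_sumr; rewrite -mulr_sumr.
apply: mulr_ge0; first exact: ler0n.
exact: gram_ge0 (gram_mul (gram_pp t1 q0) (gram_pp t2 q0)).
Qed.

Lemma pos3 (C : {set W}) : (0 < q)%N ->
  0 <= \sum_(x in C) \sum_(y in C) \sum_t1 \sum_t2 \sum_t3
     ((t1 != t2)%:R * (t1 != t3)%:R * (t2 != t3)%:R) *
     (pp x y t1 * pp x y t2 * pp x y t3).
Proof.
move=> q0; rewrite swap3; apply: sumr_ge0 => t1 _.
rewrite (swap3 C (fun t2 x y => \sum_t3 ((t1 != t2)%:R * (t1 != t3)%:R * (t2 != t3)%:R) *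
     (pp x y t1 * pp x y t2 * pp x y t3))).
apply: sumr_ge0 => t2 _.
rewrite (swap3 C (fun t3 x y => ((t1 != t2)%:R * (t1 != t3)%:R * (t2 != t3)%:R) *
     (pp x y t1 * pp x y t2 * pp x y t3))).
apply: sumr_ge0 => t3 _.
under eq_bigr do rewrite -mulr_sumr; rewrite -mulr_sumr.
apply: mulr_ge0; first by rewrite -!natrM ler0n.
apply: gram_ge0; apply: gram_mul; last exact: gram_pp.
apply: gram_mul; exact: gram_pp.
Qed.

Lemma pp_sq x y t : pp x y t ^+ 2 = (q%:R - 2) * pp x y t + (q%:R - 1).
Proof. by rewrite /pp; case: (x t == y t) => /=; ring. Qed.

Lemma sum_pp x y : \sum_t pp x y t = q%:R * (n%:R - (hamming x y)%:R) - n%:R.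
Proof.
rewrite /pp sumrB sumr_const card_ord -mulr_sumr.
have -> : \sum_(i < n) ((x i == y i)%:R : R) = (n - hamming x y)%N%:R.
  rewrite -natr_sum; congr (_%:R).
  rewrite /hamming.
  have <- : #|[set i | x i == y i]| = (n - #|[set i : 'I_n | x i != y i]|)%N.
    have hc := cardsC [set i | x i == y i]; rewrite card_ord in hc.
    have e : ~: [set i | x i == y i] = [set i | x i != y i].
      by apply/setP => i; rewrite !inE.
    rewrite e in hc; by rewrite -[X in _ = (X - _)%N]hc addnK.
  rewrite -sum1_card [RHS]big_mkcond /=; apply: eq_bigr => i _; rewrite inE; by case: (x i == y i).
rewrite natrB ?mulr1n //.
rewrite /hamming -[X in (_ <= X)%N](card_ord n); exact: max_card.
Qed.
End Words.

Section LP.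
Variable (R : realFieldType) (n q : nat).
Local Notation W := (word n q).

Lemma sum_pp2 (x y : W) : \sum_t pp R x y t ^+ 2 =
   (q%:R - 2) * (\sum_t pp R x y t) + n%:R * (q%:R - 1).
Proof.
under eq_bigr do rewrite pp_sq.
by rewrite big_split /= -mulr_sumr sumr_const card_ord mulr_natl.
Qed.

Lemma sum_pp3 (x y : W) : \sum_t pp R x y t ^+ 3 =
   (q%:R - 2) * (\sum_t pp R x y t ^+ 2) + (q%:R - 1) * (\sum_t pp R x y t).
Proof.
rewrite !mulr_sumr -big_split /=; apply: eq_bigr => t _.
set p := pp R x y t.
have h : p ^+ 2 = (q%:R - 2) * p + (q%:R - 1) by exact: pp_sq.
have : p ^+ 3 - ((q%:R - 2) * p ^+ 2 + (q%:R - 1) * p) =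
       p * (p ^+ 2 - ((q%:R - 2) * p + (q%:R - 1))) by ring.
by rewrite h subrr mulr0 => /eqP; rewrite subr_eq0 => /eqP.
Qed.

Lemma lp_core (C : {set W}) (A B c0 c1 c2 : R) :
  (0 < q)%N -> 0 <= c1 -> 0 <= c2 ->
  (forall L : R, L ^+ 3 - 3 * L * ((q%:R - 2) * L + n%:R * (q%:R - 1))
     + 2 * (((q%:R - 2) ^+ 2 + q%:R - 1) * L + (q%:R - 2) * (n%:R * (q%:R - 1)))
     + c2 * (L ^+ 2 - ((q%:R - 2) * L + n%:R * (q%:R - 1))) + c1 * L + c0
     = (L - A) * (L - B) * (L - B - q%:R)) ->
  (forall x y, x \in C -> y \in C -> x != y ->
     (\sum_t pp R x y t - A) * (\sum_t pp R x y t - B) * (\sum_t pp R x y t - B - q%:R) <= 0) ->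
  c0 * #|C|%:R ^+ 2 <= #|C|%:R * ((n%:R * (q%:R - 1) - A) * (n%:R * (q%:R - 1) - B)
     * (n%:R * (q%:R - 1) - B - q%:R)).
Proof.
move=> q0 c10 c20 hid hneg.
pose G (x y : W) := (\sum_t pp R x y t - A) * (\sum_t pp R x y t - B) * (\sum_t pp R x y t - B - q%:R).
pose Q2 (x y : W) := \sum_t1 \sum_t2 (t1 != t2)%:R * (pp R x y t1 * pp R x y t2).
pose Q3 (x y : W) := \sum_t1 \sum_t2 \sum_t3
     ((t1 != t2)%:R * (t1 != t3)%:R * (t2 != t3)%:R) *
     (pp R x y t1 * pp R x y t2 * pp R x y t3).
pose L1 (x y : W) := \sum_t pp R x y t.
have eG x y : G x y = Q3 x y + c2 * Q2 x y + c1 * L1 x y + c0.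
  rewrite /G /Q3 /Q2 /L1 Q3gen Q2gen sum_pp3 sum_pp2 -hid; ring.
have lower : c0 * #|C|%:R ^+ 2 <= \sum_(x in C) \sum_(y in C) G x y.
  under eq_bigr do under eq_bigr do rewrite eG.
  have -> : \sum_(x in C) \sum_(y in C) (Q3 x y + c2 * Q2 x y + c1 * L1 x y + c0) =
     \sum_(x in C) \sum_(y in C) Q3 x y + c2 * (\sum_(x in C) \sum_(y in C) Q2 x y)
     + c1 * (\sum_(x in C) \sum_(y in C) L1 x y) + c0 * #|C|%:R ^+ 2.
    have hc : \sum_(x in C) \sum_(y in C) c0 = c0 * #|C|%:R ^+ 2.
      by rewrite !sumr_const -mulrnA expr2 -natrM mulr_natr.
    rewrite -hc !mulr_sumr -!big_split /=; apply: eq_bigr => x _.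
    by rewrite !big_split /= !mulr_sumr.
  have h1 : 0 <= \sum_(x in C) \sum_(y in C) L1 x y := pos1 R C q0.
  have h2 : 0 <= \sum_(x in C) \sum_(y in C) Q2 x y := pos2 R C q0.
  have h3 : 0 <= \sum_(x in C) \sum_(y in C) Q3 x y := pos3 R C q0.
  have := mulr_ge0 c10 h1; have := mulr_ge0 c20 h2; lra.
apply: (le_trans lower).
have diag x : G x x = (n%:R * (q%:R - 1) - A) * (n%:R * (q%:R - 1) - B)
     * (n%:R * (q%:R - 1) - B - q%:R).
  rewrite /G sum_pp.
  have -> : hamming x x = 0%N.
    rewrite /hamming; apply/eqP; rewrite cards_eq0; apply/eqP/setP => i.
    by rewrite !inE eqxx.
  rewrite subr0; congr (_ * _ * _); ring.
have hx x : x \in C -> \sum_(y in C) G x y <= G x x.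
  move=> xC; rewrite (bigD1 x) //=.
  have : \sum_(y in C | y != x) G x y <= 0.
    apply: sumr_le0 => y /andP[yC yx]; apply: hneg => //; by rewrite eq_sym.
  lra.
apply: le_trans (ler_sum _ hx) _.
rewrite (eq_bigr _ (fun x _ => diag x)) sumr_const.
by rewrite [in X in _ <= X]mulr_natl.
Qed.
End LP.
Ltac pos0 := repeat first [ assumption | apply: exprn_ge0 | apply: ler0n | apply: mulr_ge0 | apply: addr_ge0 ].

Definition denf (R : realFieldType) (nR qR jR x : R) :=
  x ^+ 2 * (2 - qR - jR) + ((jR + qR - 1) * (2 * nR * (qR - 1) - qR) + qR) * x
  + - (nR * (nR - 1) * (qR - 1) ^+ 2 * (jR + qR)).

Lemma den_pos (R : realFieldType) (nR qR jR e : R) :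
  2 <= qR -> qR <= nR -> 0 <= jR -> jR * (jR + qR) < (qR - 1) * (nR - 2) ->
  0 < e -> e <= 1 ->
  0 < denf nR qR jR ((nR - 1) * (qR - 1) * (qR + jR) / (qR + jR - 1) + e * qR).
Proof.
move=> hq hqn hj hJ he0 he1.
set a0 := (nR - 1) * (qR - 1) * (qR + jR) / (qR + jR - 1).
have hq1 : 0 < qR + jR - 1 by lra.
have hq1' : qR + jR - 1 != 0 by rewrite gt_eqF.
pose K := (qR - 1) * (nR - 2) - jR * (jR + qR).
pose Q := qR - 2.
have K0 : 0 <= K by rewrite /K; lra.
have Q0 : 0 <= Q by rewrite /Q; lra.
have hd0 : 0 < denf nR qR jR a0.
  have E0 : (qR - 1) ^+ 2 * ((qR + jR - 1) ^+ 2 * denf nR qR jR a0) =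
    4%:R + (14%:R * jR + 18%:R * jR ^+ 2 + 10%:R * jR ^+ 3 + 2%:R * jR ^+ 4 + 18%:R * Q + 54%:R * Q * jR + 58%:R * Q * jR ^+ 2 + 26%:R * Q * jR ^+ 3 + 4%:R * Q * jR ^+ 4 + 32%:R * Q ^+ 2 + 80%:R * Q ^+ 2 * jR + 68%:R * Q ^+ 2 * jR ^+ 2 + 22%:R * Q ^+ 2 * jR ^+ 3 + 2%:R * Q ^+ 2 * jR ^+ 4 + 28%:R * Q ^+ 3 + 56%:R * Q ^+ 3 * jR + 34%:R * Q ^+ 3 * jR ^+ 2 + 6%:R * Q ^+ 3 * jR ^+ 3 + 12%:R * Q ^+ 4 + 18%:R * Q ^+ 4 * jR + 6%:R * Q ^+ 4 * jR ^+ 2 + 2%:R * Q ^+ 5 + 2%:R * Q ^+ 5 * jR + 6%:R * K + 11%:R * K * jR + 6%:R * K * jR ^+ 2 + K * jR ^+ 3 + 21%:R * K * Q + 31%:R * K * Q * jR + 14%:R * K * Q * jR ^+ 2 + 2%:R * K * Q * jR ^+ 3 + 27%:R * K * Q ^+ 2 + 30%:R * K * Q ^+ 2 * jR + 10%:R * K * Q ^+ 2 * jR ^+ 2 + K * Q ^+ 2 * jR ^+ 3 + 15%:R * K * Q ^+ 3 + 11%:R * K * Q ^+ 3 * jR + 2%:R * K * Q ^+ 3 * jR ^+ 2 + 3%:R * K * Q ^+ 4 + K * Q ^+ 4 * jR + 2%:R * K ^+ 2 + K ^+ 2 * jR + 5%:R * K ^+ 2 * Q + 2%:R * K ^+ 2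 * Q * jR + 4%:R * K ^+ 2 * Q ^+ 2 + K ^+ 2 * Q ^+ 2 * jR + K ^+ 2 * Q ^+ 3).
    rewrite /K /Q /a0 /denf; field => //.
  have : 0 < (qR - 1) ^+ 2 * ((qR + jR - 1) ^+ 2 * denf nR qR jR a0).
    rewrite E0; have : 0 <= 14%:R * jR + 18%:R * jR ^+ 2 + 10%:R * jR ^+ 3 + 2%:R * jR ^+ 4 + 18%:R * Q + 54%:R * Q * jR + 58%:R * Q * jR ^+ 2 + 26%:R * Q * jR ^+ 3 + 4%:R * Q * jR ^+ 4 + 32%:R * Q ^+ 2 + 80%:R * Q ^+ 2 * jR + 68%:R * Q ^+ 2 * jR ^+ 2 + 22%:R * Q ^+ 2 * jR ^+ 3 + 2%:R * Q ^+ 2 * jR ^+ 4 + 28%:R * Q ^+ 3 + 56%:R * Q ^+ 3 * jR + 34%:R * Q ^+ 3 * jR ^+ 2 + 6%:R * Q ^+ 3 * jR ^+ 3 + 12%:R * Q ^+ 4 + 18%:R * Q ^+ 4 * jR + 6%:R * Q ^+ 4 * jR ^+ 2 + 2%:R * Q ^+ 5 + 2%:R * Q ^+ 5 * jR + 6%:R * K + 11%:R * K * jR + 6%:R * K * jR ^+ 2 + K * jR ^+ 3 + 21%:R * K * Q + 31%:R * K * Q * jR + 14%:R * K * Q * jR ^+ 2 + 2%:R * K * Q * jR ^+ 3 + 27%:R * K * Q ^+ 2 + 30%:R * K * Q ^+ 2 * jR + 10%:R * K * Q ^+ 2 * jR ^+ 2 + K * Q ^+ 2 * jR ^+ 3 +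 15%:R * K * Q ^+ 3 + 11%:R * K * Q ^+ 3 * jR + 2%:R * K * Q ^+ 3 * jR ^+ 2 + 3%:R * K * Q ^+ 4 + K * Q ^+ 4 * jR + 2%:R * K ^+ 2 + K ^+ 2 * jR + 5%:R * K ^+ 2 * Q + 2%:R * K ^+ 2 * Q * jR + 4%:R * K ^+ 2 * Q ^+ 2 + K ^+ 2 * Q ^+ 2 * jR + K ^+ 2 * Q ^+ 3 by pos0.
    lra.
  have p1 : 0 < (qR - 1) ^+ 2 by apply: exprn_gt0; lra.
  have p2 : 0 < (qR + jR - 1) ^+ 2 by apply: exprn_gt0; lra.
  by rewrite pmulr_rgt0 // pmulr_rgt0.
have hd1 : 0 < denf nR qR jR (a0 + qR).
  have E1 : (qR - 1) ^+ 2 * ((qR + jR - 1) ^+ 2 * denf nR qR jR (a0 + qR)) =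
    12%:R + (30%:R * jR + 26%:R * jR ^+ 2 + 10%:R * jR ^+ 3 + 2%:R * jR ^+ 4 + 54%:R * Q + 110%:R * Q * jR + 78%:R * Q * jR ^+ 2 + 26%:R * Q * jR ^+ 3 + 4%:R * Q * jR ^+ 4 + 96%:R * Q ^+ 2 + 152%:R * Q ^+ 2 * jR + 84%:R * Q ^+ 2 * jR ^+ 2 + 22%:R * Q ^+ 2 * jR ^+ 3 + 2%:R * Q ^+ 2 * jR ^+ 4 + 84%:R * Q ^+ 3 + 96%:R * Q ^+ 3 * jR + 38%:R * Q ^+ 3 * jR ^+ 2 + 6%:R * Q ^+ 3 * jR ^+ 3 + 36%:R * Q ^+ 4 + 26%:R * Q ^+ 4 * jR + 6%:R * Q ^+ 4 * jR ^+ 2 + 6%:R * Q ^+ 5 + 2%:R * Q ^+ 5 * jR + 10%:R * K + 15%:R * K * jR + 6%:R * K * jR ^+ 2 + K * jR ^+ 3 + 35%:R * K * Q + 41%:R * K * Q * jR + 14%:R * K * Q * jR ^+ 2 + 2%:R * K * Q * jR ^+ 3 + 45%:R * K * Q ^+ 2 + 38%:R * K * Q ^+ 2 * jR + 10%:R * K * Q ^+ 2 * jR ^+ 2 + K * Q ^+ 2 * jR ^+ 3 + 25%:R * K * Q ^+ 3 + 13%:R * K * Q ^+ 3 * jR + 2%:R * K * Q ^+ 3 * jR ^+ 2 + 5%:R * K * Q ^+ 4 + K * Q ^+ 4 * jR + 2%:R * K ^+ 2 + K ^+ 2 * jR + 5%:R * K ^+ 2 * Q + 2%:R * K ^+ 2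 * Q * jR + 4%:R * K ^+ 2 * Q ^+ 2 + K ^+ 2 * Q ^+ 2 * jR + K ^+ 2 * Q ^+ 3).
    rewrite /K /Q /a0 /denf; field => //.
  have : 0 < (qR - 1) ^+ 2 * ((qR + jR - 1) ^+ 2 * denf nR qR jR (a0 + qR)).
    rewrite E1; have : 0 <= 30%:R * jR + 26%:R * jR ^+ 2 + 10%:R * jR ^+ 3 + 2%:R * jR ^+ 4 + 54%:R * Q + 110%:R * Q * jR + 78%:R * Q * jR ^+ 2 + 26%:R * Q * jR ^+ 3 + 4%:R * Q * jR ^+ 4 + 96%:R * Q ^+ 2 + 152%:R * Q ^+ 2 * jR + 84%:R * Q ^+ 2 * jR ^+ 2 + 22%:R * Q ^+ 2 * jR ^+ 3 + 2%:R * Q ^+ 2 * jR ^+ 4 + 84%:R * Q ^+ 3 + 96%:R * Q ^+ 3 * jR + 38%:R * Q ^+ 3 * jR ^+ 2 + 6%:R * Q ^+ 3 * jR ^+ 3 + 36%:R * Q ^+ 4 + 26%:R * Q ^+ 4 * jR + 6%:R * Q ^+ 4 * jR ^+ 2 + 6%:R * Q ^+ 5 + 2%:R * Q ^+ 5 * jR + 10%:R * K + 15%:R * K * jR + 6%:R * K * jR ^+ 2 + K * jR ^+ 3 + 35%:R * K * Q + 41%:R * K * Q * jR + 14%:R * K * Q * jR ^+ 2 + 2%:R * K * Q * jR ^+ 3 + 45%:R * K * Q ^+ 2 + 38%:R * K * Q ^+ 2 * jR + 10%:R * K * Q ^+ 2 * jR ^+ 2 + K * Q ^+ 2 * jR ^+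 3 + 25%:R * K * Q ^+ 3 + 13%:R * K * Q ^+ 3 * jR + 2%:R * K * Q ^+ 3 * jR ^+ 2 + 5%:R * K * Q ^+ 4 + K * Q ^+ 4 * jR + 2%:R * K ^+ 2 + K ^+ 2 * jR + 5%:R * K ^+ 2 * Q + 2%:R * K ^+ 2 * Q * jR + 4%:R * K ^+ 2 * Q ^+ 2 + K ^+ 2 * Q ^+ 2 * jR + K ^+ 2 * Q ^+ 3 by pos0.
    lra.
  have p1 : 0 < (qR - 1) ^+ 2 by apply: exprn_gt0; lra.
  have p2 : 0 < (qR + jR - 1) ^+ 2 by apply: exprn_gt0; lra.
  by rewrite pmulr_rgt0 // pmulr_rgt0.
have -> : denf nR qR jR (a0 + e * qR) = (1 - e) * denf nR qR jR a0
   + e * denf nR qR jR (a0 + qR) + (qR + jR - 2) * (e * (1 - e)) * qR ^+ 2.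
  rewrite /denf; ring.
have h1 : 0 <= (1 - e) * denf nR qR jR a0 by apply: mulr_ge0; lra.
have h2 : 0 < e * denf nR qR jR (a0 + qR) by apply: mulr_gt0.
have h3 : 0 <= (qR + jR - 2) * (e * (1 - e)) * qR ^+ 2.
  apply: mulr_ge0; last exact: sqr_ge0.
  apply: mulr_ge0; first lra.
  apply: mulr_ge0; lra.
lra.
Qed.

Section Coefs.
Variable (R : realFieldType) (nR qR jR a : R).
Definition cN := nR * (qR - 1).
Definition cA := cN - (qR * (nR - 1) - nR + 2 - jR).
Definition cB := cN - a - qR.
Definition cs1 := cA + 2 * cB + qR.
Definition cc2 := 3 * (qR - 2) - cs1.
Definition cc1 := cc2 * (qR - 2) + 3 * cN + (cA * (2 * cB + qR) + cB * (cB + qR))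
   - 2 * ((qR - 2) ^+ 2 + qR - 1).
Definition cc0 := (qR - 2 - cs1) * cN - cA * cB * (cB + qR).

Lemma cc0_den : cc0 = denf nR qR jR a.
Proof. rewrite /cc0 /cs1 /cA /cB /cN /denf; ring. Qed.

Lemma cc_id (L : R) : L ^+ 3 - 3 * L * ((qR - 2) * L + nR * (qR - 1))
     + 2 * (((qR - 2) ^+ 2 + qR - 1) * L + (qR - 2) * (nR * (qR - 1)))
     + cc2 * (L ^+ 2 - ((qR - 2) * L + nR * (qR - 1))) + cc1 * L + cc0
     = (L - cA) * (L - cB) * (L - cB - qR).
Proof. rewrite /cc0 /cc1 /cc2 /cs1 /cA /cB /cN; ring. Qed.

Lemma cc1_pos : 2 <= qR -> qR <= nR -> 0 <= jR -> jR * (jR + qR) < (qR - 1) * (nR - 2) ->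
  0 <= cc1.
Proof.
move=> hq hqn hj hJ.
have e4 : 4 * cc1 = (2 * a - 2 * nR * (qR - 1) + qR - 2 * jR) ^+ 2
   + (4 * ((qR - 1) * (3 * nR - 2 * jR - 2)) - (qR - 2 * jR) ^+ 2).
  rewrite /cc1 /cc2 /cs1 /cA /cB /cN; ring.
have : 0 < 4 * ((qR - 1) * (3 * nR - 2 * jR - 2)) - (qR - 2 * jR) ^+ 2 by nra.
have := sqr_ge0 (2 * a - 2 * nR * (qR - 1) + qR - 2 * jR).
lra.
Qed.

Lemma cc2_pos (e : R) : 2 <= qR -> qR <= nR -> 0 <= jR -> jR * (jR + qR) < (qR - 1) * (nR - 2) ->
  0 < e -> a = (nR - 1) * (qR - 1) * (qR + jR) / (qR + jR - 1) + e * qR ->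
  0 <= cc2.
Proof.
move=> hq hqn hj hJ he ha.
have hq1 : 0 < qR + jR - 1 by lra.
have hq1' : qR + jR - 1 != 0 by rewrite gt_eqF.
have -> : cc2 = 2 * (((qR - 1) * (nR - 2) - jR * (jR + qR)) / (qR + jR - 1))
   + 2 * e * qR + qR + jR.
  rewrite /cc2 /cs1 /cA /cB /cN ha; field => //.
have : 0 < ((qR - 1) * (nR - 2) - jR * (jR + qR)) / (qR + jR - 1).
  apply: divr_gt0 => //; lra.
have : 0 < e * qR by apply: mulr_gt0 => //; lra.
lra.
Qed.
End Coefs.

Theorem theorem2 (R : realType) (n q : nat) (d : int) (e : R) :
  (2 <= q)%N -> (q <= n)%N ->
  let S1 : R := Num.sqrt ((q ^ 2)%:R + 4 * (q%:R - 1) * (n%:R - 2)) in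
  let j : int := q%:Z * (n%:Z - 1 - d) - n%:Z + 2 in
  (0 <= j) -> (j%:~R : R) < (S1 - q%:R) / 2 ->
  let s : R := 1 - 2 * d%:~R / n%:R in
  let jR : R := j%:~R in
  let nR : R := n%:R in
  let qR : R := q%:R in
  let d0 : R := nR - jR * (nR - 1) / (qR * (jR + qR - 1)) in
  0 < e -> e <= 1 -> (d0 + e) \is a Num.int ->
  let a : R := (nR - 1) * (qR - 1) * (qR + jR) / (qR + jR - 1) + e * qR in
  let D : R := (jR + qR - 1) * (2 * nR * (qR - 1) - qR) + qR in
  let E : R := - (nR * (nR - 1) * (qR - 1) ^+ 2 * (jR + qR)) in
  ((A_q q n s)%:R : R) <=
    a * (a + qR) * d%:~R * qR / (a ^+ 2 * (2 - qR - jR) + D * a + E).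
Proof.
move=> hq hqn S1 j hj0 hjS s jR nR qR d0 he0 he1 hint.
cbv zeta.
set a := (nR - 1) * (qR - 1) * (qR + jR) / (qR + jR - 1) + e * qR.
change (a ^+ 2 * (2 - qR - jR) + _ * a + _) with (denf nR qR jR a).
have qR2 : 2 <= qR by rewrite /qR (ler_nat R 2 q).
have hqn' : qR <= nR by rewrite /qR /nR ler_nat.
have hjR : 0 <= jR by rewrite /jR ler0z.
have hJ : jR * (jR + qR) < (qR - 1) * (nR - 2).
  have S1ge : 0 <= S1 by apply: sqrtr_ge0.
  have h1 : 2 * jR + qR < S1 by rewrite -/jR -/qR in hjS; lra.
  have hXe : (q ^ 2)%:R + 4 * (q%:R - 1) * (n%:R - 2) = qR ^+ 2 + 4 * (qR - 1) * (nR - 2) :> R.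
    by rewrite natrX.
  have hX : 0 <= (q ^ 2)%:R + 4 * (q%:R - 1) * (n%:R - 2) :> R.
    case: (lerP ((q ^ 2)%:R + 4 * (q%:R - 1) * (n%:R - 2) : R) 0) => hX0; last by apply: ltW.
    have : S1 = 0 by rewrite /S1 ler0_sqrtr.
    lra.
  have hS2 : S1 ^+ 2 = qR ^+ 2 + 4 * (qR - 1) * (nR - 2) by rewrite /S1 (sqr_sqrtr hX) hXe.
  have hp : 0 < (S1 - (2 * jR + qR)) * (S1 + (2 * jR + qR)) by apply: mulr_gt0; lra.
  have e1 : (S1 - (2 * jR + qR)) * (S1 + (2 * jR + qR)) = S1 ^+ 2 - (2 * jR + qR) ^+ 2 by ring.
  rewrite e1 hS2 in hp.
  lra.
have hjd : jR = qR * (nR - 1 - d%:~R) - nR + 2.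
  rewrite /jR /j /qR /nR !(intrD, intrB, intrM) /= !intrN.
  rewrite -!pmulrn; ring.
have hq1 : 0 < qR + jR - 1 by lra.
have hq1' : qR + jR - 1 != 0 by rewrite gt_eqF.
have hq0 : qR != 0 by rewrite gt_eqF //; lra.
case/intrP: hint => mz hm.
have ha0 : a = qR * (mz%:~R - 1).
  rewrite -hm /a /d0; field.
  by rewrite -/jR -/qR [jR + qR]addrC hq1' hq0.
have [C Cc hmax] : exists2 C : {set word n q}, is_code s C & A_q q n s = #|C|.
  have hA : (0 < #|[pred C : {set word n q} | is_code s C]|)%N.
    apply/card_gt0P; exists set0; rewrite inE /is_code.
    by apply/forallP => x; rewrite inE.
  have [C CA eC] := eq_bigmax_cond (fun C : {set word n q} => #|C|) hA.
  exists C; first by move: CA; rewrite inE.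
  exact: eC.
rewrite hmax.
have q0 : (0 < q)%N by apply: leq_trans hq.
have hn0 : 0 < nR by lra.
have c1p := cc1_pos a qR2 hqn' hjR hJ.
have c2p := @cc2_pos R nR qR jR a e qR2 hqn' hjR hJ he0 (erefl a).
have hneg : forall x y, x \in C -> y \in C -> x != y ->
     (\sum_t pp R x y t - cA nR qR jR) * (\sum_t pp R x y t - cB nR qR a)
     * (\sum_t pp R x y t - cB nR qR a - q%:R) <= 0.
  move=> x y xC yC xy.
  rewrite sum_pp.
  have hin : inner R x y <= s.
    move/forallP: Cc => /(_ x) /implyP /(_ xC) /forallP /(_ y) /implyP /(_ yC) /implyP.
    by apply.
  rewrite /inner /s in hin.
  set h := (hamming x y)%:R : R.
  have hdh : d%:~R <= h.
    have : d%:~R * nR^-1 <= h * nR^-1 by rewrite -/nR in hin; lra.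
    by rewrite ler_pM2r ?invr_gt0.
  have hk : 0 <= (mz%:~R - h) * (mz%:~R - h - 1).
    have hint2 : mz%:~R - h \is a Num.int by rewrite rpredB ?intr_int ?natr_int.
    have := intr_ler_sqr hint2; lra.
  have -> : (q%:R * (n%:R - h) - n%:R - cA nR qR jR) * (q%:R * (n%:R - h) - n%:R - cB nR qR a)
     * (q%:R * (n%:R - h) - n%:R - cB nR qR a - q%:R) =
     qR ^+ 3 * ((d%:~R - h) * ((mz%:~R - h) * (mz%:~R - h - 1))).
    rewrite /cA /cB /cN ha0 hjd; ring.
  apply: mulr_ge0_le0; first by apply: exprn_ge0; lra.
  apply: mulr_le0_ge0 => //; lra.
have key := @lp_core R n q C _ _ _ _ _ q0 c1p c2p (cc_id nR qR jR a) hneg.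
rewrite -(cc0_den nR qR jR a).
have c0p : 0 < cc0 nR qR jR a by rewrite cc0_den; apply: den_pos.
have eG : a * (a + qR) * d%:~R * qR =
   (n%:R * (q%:R - 1) - cA nR qR jR) * (n%:R * (q%:R - 1) - cB nR qR a)
     * (n%:R * (q%:R - 1) - cB nR qR a - q%:R).
  rewrite /cA /cB /cN ha0 hjd; ring.
rewrite eG ler_pdivlMr //.
case: (posnP #|C|) => [->|hM].
  rewrite mul0r -eG.
  have hjn : jR < nR - 2 by nra.
  have hd : 0 < qR * d%:~R by rewrite hjd in hjn *; nra.
  have hd' : 0 <= (d%:~R : R).
    move: hd; rewrite pmulr_rgt0; last lra.
    exact: ltW.
  have hmm : 0 <= mz%:~R * (mz%:~R - 1 : R).
    have := intr_ler_sqr (intr_int R mz); lra.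
  rewrite ha0.
  have -> : qR * (mz%:~R - 1) * (qR * (mz%:~R - 1) + qR) * d%:~R * qR =
     qR ^+ 3 * (d%:~R * (mz%:~R * (mz%:~R - 1))) by ring.
  apply: mulr_ge0; first by apply: exprn_ge0; lra.
  exact: mulr_ge0.
have hMp : (0 : R) < #|C|%:R by rewrite ltr0n.
rewrite -(ler_pM2l hMp).
have -> : #|C|%:R * (#|C|%:R * cc0 nR qR jR a) = cc0 nR qR jR a * #|C|%:R ^+ 2 by ring.
exact: key.
Qed.
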